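(* For every integer $j\ge 1$ the following identities hold (in each sum the $m=0$ term uses $\zeta(0)=-\tfrac12$): (a) $\displaystyle (3^{1-2j}-1)\zeta(2j)=\frac{(-1)^j j(2\pi)^{2j}}{(2j)!\,3^{2j-1}}+(-1)^{j+1}(2\pi)^{2j}\sum_{m=0}^{j}\frac{(-1)^{m+1}}{(2j-2m)!\,2^{2m-1}\,3^{2j-2m}\,\pi^{2m}}\zeta(2m)$; (b) $\displaystyle (4^{1-2j}-2^{1-2j})\zeta(2j)=\frac{(-1)^j j(2\pi)^{2j}}{(2j)!\,4^{2j-1}}+(-1)^{j+1}(2\pi)^{2j}\sum_{m=0}^{j}\frac{(-1)^{m+1}}{(2j-2m)!\,2^{2m-1}\,4^{2j-2m}\,\pi^{2m}}\zeta(2m)$; (c) $\displaystyle (6^{1-2j}-3^{1-2j}-2^{1-2j}+1)\zeta(2j)=\frac{(-1)^j j(2\pi)^{2j}}{(2j)!\,6^{2j-1}}+(-1)^{j+1}(2\pi)^{2j}\sum_{m=0}^{j}\frac{(-1)^{m+1}}{(2j-2m)!\,2^{2m-1}\,6^{2j-2m}\,\pi^{2m}}\zeta(2m)$; (d) $\displaystyle -\frac{j}{12^{2j-1}}(1+7^{2j-1})+\sum_{m=0}^{j}\frac{(2j)!}{(2j-2m)!}\frac{(-1)^{m+1}}{2^{2m-1}\pi^{2m}}(1+7^{2j-2m})\frac{\zeta(2m)}{12^{2j-2m}}=\frac{(6^{1-2j}-3^{1-2j}-2^{1-2j}+1)(2j)!(-1)^{j+1}}{2^{4j-1}\pi^{2j}}\zeta(2j)$;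 (e) $\displaystyle -\frac{j}{8^{2j-1}}(1+5^{2j-1})+\sum_{m=0}^{j}\frac{(2j)!}{(2j-2m)!}\frac{(-1)^{m+1}}{2^{2m-1}\pi^{2m}}(1+5^{2j-2m})\frac{\zeta(2m)}{8^{2j-2m}}=\frac{(4^{1-2j}-2^{1-2j})(2j)!(-1)^{j+1}}{2^{4j-1}\pi^{2j}}\zeta(2j)$.
   Context: $\zeta$ denotes the Riemann zeta function (analytically continued), so $\zeta(0)=-1/2$. *)

(* Defs.v *)
From Stdlib Require Import Reals Lra Lia ZArith ClassicalEpsilon.
Open Scope R_scope.

(* Value of the Dirichlet series sum_{n>=1} 1/n^s for a natural exponent s
   (the actual sum when s >= 2, chosen via classical choice as the unique
   limit of the partial sums). *)
Definition zeta_series (s : nat) : R :=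
  epsilon (inhabits 0) (fun l => infinite_sum (fun n => / (INR (S n)) ^ s) l).

(* Riemann zeta at nonnegative even integers 2m: zeta(0) = -1/2 (value of the
   analytic continuation, as fixed by the paper), zeta(2m) = sum 1/n^(2m) for m >= 1. *)
Definition zeta_even (m : nat) : R :=
  match m with
  | O => - / 2
  | S _ => zeta_series (2 * m)
  end.

Definition zpow (a : R) (k : Z) : R := powerRZ a k.

(* Main.v *)
Require Import Defs.
From Stdlib Require Import Reals ZArith.
Open Scope R_scope.
From Stdlib Require Import Lra Lia Arith Factorial ClassicalEpsilon.
From Coquelicot Require Import Coquelicot.
Open Scope R_scope.
Open Scope R_scope.

Fixpoint bf (n:nat) : nat -> R :=
  match n with
  | O => fun _ => 1
  | S p => fun k => if (k <=? p)%nat then bf p k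
      else - / INR (S (S p)) * sum_f_R0 (fun i => Binomial.C (S (S p)) i * bf p i) p
  end.
Definition bern n := bf n n.
Lemma bf_S p k : bf (S p) k = if (k <=? p)%nat then bf p k
      else - / INR (S (S p)) * sum_f_R0 (fun i => Binomial.C (S (S p)) i * bf p i) p.
Proof. reflexivity. Qed.

Lemma bf_stable : forall n k, (k <= n)%nat -> bf n k = bern k.
Proof.
  induction n; intros k Hk.
  - assert (k = 0%nat) by lia; subst; reflexivity.
  - simpl. destruct (Nat.leb_spec k n).
    + apply IHn; lia.
    + assert (k = S n) by lia; subst. unfold bern. rewrite bf_S.
      rewrite (proj2 (Nat.leb_gt (S n) n)) by lia. reflexivity.
Qed.

Lemma bern_rec : forall p, bern (S p) =
  - / INR (S (S p)) * sum_f_R0 (fun i => Binomial.C (S (S p)) i * bern i) p.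
Proof.
  intro p. unfold bern at 1. rewrite bf_S.
  rewrite (proj2 (Nat.leb_gt (S p) p)) by lia. f_equal.
  apply sum_eq. intros i Hi. rewrite bf_stable by lia. reflexivity.
Qed.

Lemma binom_n_pred : forall n, Binomial.C (S n) n = INR (S n).
Proof.
  intro n. unfold Binomial.C. replace (S n - n)%nat with 1%nat by lia.
  rewrite fact_simpl. rewrite mult_INR. simpl (fact 1). simpl (INR 1).
  field. apply INR_fact_neq_0.
Qed.

Lemma bern_sum0 : forall p,
  sum_f_R0 (fun k => Binomial.C (S (S p)) k * bern k) (S p) = 0.
Proof.
  intro p. simpl (sum_f_R0 _ (S p)). rewrite binom_n_pred, bern_rec.
  field. apply not_0_INR. lia.
Qed.

Definition Bp (n : nat) (x : R) : R :=
  sum_f_R0 (fun k => Binomial.C n k * bern k * x ^ (n - k)) n.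

Lemma is_derive_sum (f : nat -> R -> R) (df : nat -> R) n x :
  (forall k, (k <= n)%nat -> is_derive (f k) x (df k)) ->
  is_derive (fun y => sum_f_R0 (fun k => f k y) n) x (sum_f_R0 df n).
Proof.
  induction n; intros H.
  - simpl. apply H; lia.
  - simpl. apply (is_derive_plus (fun y => sum_f_R0 (fun k => f k y) n) (f (S n))).
    + apply IHn; intros; apply H; lia.
    + apply H; lia.
Qed.

Lemma binom_deriv : forall n k, (k <= n)%nat ->
  Binomial.C (S n) k * INR (S n - k) = INR (S n) * Binomial.C n k.
Proof.
  intros n k Hk. unfold Binomial.C.
  replace (S n - k)%nat with (S (n - k)) by lia.
  rewrite !fact_simpl, !mult_INR.
  field. split; [apply INR_fact_neq_0|]. split; [apply INR_fact_neq_0|].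
  apply not_0_INR; lia.
Qed.

Lemma Bp_deriv : forall n x, is_derive (Bp (S n)) x (INR (S n) * Bp n x).
Proof.
  intros n x.
  assert (H : is_derive (Bp (S n)) x (sum_f_R0
     (fun k => Binomial.C (S n) k * bern k * (INR (S n - k) * x ^ pred (S n - k))) (S n))).
  { unfold Bp. apply (is_derive_sum (fun k y => Binomial.C (S n) k * bern k * y ^ (S n - k))).
    intros k Hk. set (m := (S n - k)%nat). auto_derive. auto. ring. }
  replace (INR (S n) * Bp n x) with (sum_f_R0
     (fun k => Binomial.C (S n) k * bern k * (INR (S n - k) * x ^ pred (S n - k))) (S n)); auto.
  rewrite tech5. rewrite Nat.sub_diag. simpl (INR 0). rewrite Rmult_0_l, Rmult_0_r, Rplus_0_r.
  unfold Bp. rewrite scal_sum. apply sum_eq. intros k Hk.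
  replace (pred (S n - k)) with (n - k)%nat by lia.
  transitivity (Binomial.C (S n) k * INR (S n - k) * bern k * x ^ (n - k)); [ring|].
  rewrite (binom_deriv n k Hk). ring.
Qed.

Lemma binom_nn : forall n, Binomial.C n n = 1.
Proof. intro n. unfold Binomial.C. rewrite Nat.sub_diag. simpl (fact 0).
  simpl (INR 1). field. apply INR_fact_neq_0. Qed.

Lemma Bp_0 : forall n, Bp n 0 = bern n.
Proof.
  intro n. unfold Bp. destruct n.
  - simpl. unfold Binomial.C. simpl. field.
  - rewrite tech5, Nat.sub_diag, binom_nn.
    rewrite sum_eq_R0. simpl; ring.
    intros k Hk. replace (S n - k)%nat with (S (n - k)) by lia. simpl. ring.
Qed.

Lemma Bp_1 : forall n, (2 <= n)%nat -> Bp n 1 = Bp n 0.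
Proof.
  intros n Hn. rewrite Bp_0. destruct n as [|[|p]]; try lia.
  unfold Bp. rewrite tech5, binom_nn.
  rewrite (sum_eq _ (fun k => Binomial.C (S (S p)) k * bern k)).
  - rewrite bern_sum0, Nat.sub_diag. simpl. ring.
  - intros. rewrite pow1. ring.
Qed.

Lemma der_cont f x l : is_derive f x l -> continuity_pt f x.
Proof.
  intro H. apply derivable_continuous_pt. exists l. apply is_derive_Reals; auto.
Qed.

Lemma der_affine f d a b : (forall x, is_derive f x d) -> f b - f a = d * (b - a).
Proof.
  intro H. destruct (MVT_gen f a b (fun _ => d)) as [c [_ Hc]]; auto.
  intros; eapply der_cont; eauto.
Qed.

Lemma family_zero (F : nat -> R -> R) (c : nat -> R) (a : R) :
  (forall x : R, F 0%nat x = 0) ->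
  (forall n (x : R), is_derive (F (S n)) x (c n * F n x)) ->
  (forall n, c n <> 0) -> a <> 0 ->
  (forall n, F (S (S n)) a = F (S (S n)) 0) ->
  forall n x, F n x = 0.
Proof.
  intros H0 HD Hc Ha Hper n. induction n; intro x; auto.
  assert (K : forall y, F (S n) y = F (S n) 0).
  { intro y. assert (E := der_affine (F (S n)) 0 0 y).
    rewrite Rmult_0_l in E. assert (F (S n) y - F (S n) 0 = 0); [|lra].
    apply E. intro z. rewrite <- (Rmult_0_r (c n)), <- (IHn z). apply HD. }
  assert (E : F (S (S n)) a - F (S (S n)) 0 = c (S n) * F (S n) 0 * (a - 0)).
  { apply der_affine. intro z. rewrite <- (K z). apply HD. }
  rewrite Hper in E. rewrite K.
  assert (c (S n) * F (S n) 0 * a = 0) by lra.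
  apply Rmult_integral in H. destruct H as [H|H]; [|contradiction].
  apply Rmult_integral in H. destruct H; [exfalso; apply (Hc (S n)); auto| auto].
Qed.

Lemma Bp0 : forall x, Bp 0 x = 1.
Proof. intro x. unfold Bp, bern, Binomial.C. simpl. field. Qed.

Lemma Bp_der_lin n a b (x : R) :
  is_derive (fun y => Bp (S n) (a * y + b)) x (a * (INR (S n) * Bp n (a * x + b))).
Proof.
  apply (is_derive_comp (Bp (S n)) (fun y => a * y + b)).
  - apply Bp_deriv.
  - auto_derive; auto; ring.
Qed.

Lemma is_derive_eq (f g : R -> R) (x l l' : R) :
  is_derive f x l -> (forall t, f t = g t) -> l = l' -> is_derive g x l'.
Proof. intros H E1 E2. subst. eapply is_derive_ext; eauto. Qed.

Lemma Bp_reflect : forall n x, Bp n (1 - x) = (-1) ^ n * Bp n x.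
Proof.
  intros n x.
  assert (H := family_zero (fun n x => Bp n (1 - x) - (-1) ^ n * Bp n x)
     (fun n => - INR (S n)) 1).
  enough (Bp n (1 - x) - (-1) ^ n * Bp n x = 0) by lra.
  apply H; clear H n x.
  - intro x. rewrite !Bp0. simpl. ring.
  - intros n x.
    assert (H1 := Bp_der_lin n (-1) 1 x).
    assert (H2 := Bp_der_lin n 1 0 x).
    assert (H3 := is_derive_minus _ _ x _ _ H1
      (is_derive_scal _ x ((-1) ^ S n) _ H2)).
    eapply is_derive_eq; [exact H3| |].
    + intro t; simpl. unfold minus, plus, opp; simpl.
      replace (1 * t + 0) with t by ring.
      replace (-1 * t + 1) with (1 - t) by ring. ring.
    + unfold minus, plus, opp; simpl.
      replace (1 * x + 0) with x by ring.
      replace (-1 * x + 1) with (1 - x) by ring. ring.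
  - intro n; assert (0 < INR (S n)) by (apply lt_0_INR; lia); lra.
  - lra.
  - intro n. simpl. replace (1 - 1) with 0 by ring. replace (1 - 0) with 1 by ring.
    rewrite (Bp_1 (S (S n))) by lia. ring.
Qed.

Lemma bern_odd : forall p, bern (2 * p + 3) = 0.
Proof.
  intro p. rewrite <- Bp_0.
  assert (H := Bp_reflect (2 * p + 3) 0). replace (1 - 0) with 1 in H by ring.
  rewrite Bp_1 in H by lia.
  replace ((-1) ^ (2 * p + 3)) with (-1) in H.
  - lra.
  - rewrite pow_add, pow_mult. replace ((-1)^2) with 1 by ring. rewrite pow1. ring.
Qed.

Lemma Bp_mult2 : forall n x, 2 * Bp n (2 * x) = 2 ^ n * (Bp n x + Bp n (x + /2)).
Proof.
  intros n x.
  assert (H := family_zero (fun n x => 2 * Bp n (2 * x) - 2 ^ n * (Bp n x + Bp n (x + /2)))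
     (fun n => 2 * INR (S n)) (/2)).
  enough (2 * Bp n (2 * x) - 2 ^ n * (Bp n x + Bp n (x + /2)) = 0) by lra.
  apply H; clear H n x.
  - intro x. rewrite !Bp0. simpl. ring.
  - intros n x.
    assert (H1 := Bp_der_lin n 2 0 x).
    assert (H2 := Bp_der_lin n 1 0 x).
    assert (H4 := Bp_der_lin n 1 (/2) x).
    assert (H3 := is_derive_minus _ _ x _ _ (is_derive_scal _ x 2 _ H1)
      (is_derive_scal _ x (2 ^ S n) _ (is_derive_plus _ _ x _ _ H2 H4))).
    eapply is_derive_eq; [exact H3| |].
    + intro t; simpl. unfold minus, plus, opp; simpl.
      replace (1 * t + 0) with t by ring. replace (2 * t + 0) with (2 * t) by ring.
      replace (1 * t + /2) with (t + /2) by ring. ring.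
    + unfold minus, plus, opp; simpl.
      replace (1 * x + 0) with x by ring. replace (2 * x + 0) with (2 * x) by ring.
      replace (1 * x + /2) with (x + /2) by ring. ring.
  - intro n; assert (0 < INR (S n)) by (apply lt_0_INR; lia); lra.
  - lra.
  - intro n. replace (2 * /2) with 1 by field. replace (/2 + /2) with 1 by field.
    replace (2 * 0) with 0 by ring. replace (0 + /2) with (/2) by ring.
    rewrite (Bp_1 (S (S n))) by lia. ring.
Qed.

Lemma Bp_mult3 : forall n x,
  3 * Bp n (3 * x) = 3 ^ n * (Bp n x + Bp n (x + /3) + Bp n (x + 2/3)).
Proof.
  intros n x.
  assert (H := family_zero (fun n x => 3 * Bp n (3 * x)
        - 3 ^ n * (Bp n x + Bp n (x + /3) + Bp n (x + 2/3)))
     (fun n => 3 * INR (S n)) (/3)).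
  enough (3 * Bp n (3 * x) - 3 ^ n * (Bp n x + Bp n (x + /3) + Bp n (x + 2/3)) = 0) by lra.
  apply H; clear H n x.
  - intro x. rewrite !Bp0. simpl. ring.
  - intros n x.
    assert (H1 := Bp_der_lin n 3 0 x).
    assert (H2 := Bp_der_lin n 1 0 x).
    assert (H4 := Bp_der_lin n 1 (/3) x).
    assert (H5 := Bp_der_lin n 1 (2/3) x).
    assert (H3 := is_derive_minus _ _ x _ _ (is_derive_scal _ x 3 _ H1)
      (is_derive_scal _ x (3 ^ S n) _
         (is_derive_plus _ _ x _ _ (is_derive_plus _ _ x _ _ H2 H4) H5))).
    eapply is_derive_eq; [exact H3| |].
    + intro t; simpl. unfold minus, plus, opp; simpl.
      replace (1 * t + 0) with t by ring. replace (3 * t + 0) with (3 * t) by ring.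
      replace (1 * t + /3) with (t + /3) by ring.
      replace (1 * t + 2/3) with (t + 2/3) by ring. ring.
    + unfold minus, plus, opp; simpl.
      replace (1 * x + 0) with x by ring. replace (3 * x + 0) with (3 * x) by ring.
      replace (1 * x + /3) with (x + /3) by ring.
      replace (1 * x + 2/3) with (x + 2/3) by ring. ring.
  - intro n; assert (0 < INR (S n)) by (apply lt_0_INR; lia); lra.
  - lra.
  - intro n. replace (3 * /3) with 1 by field. replace (/3 + /3) with (2/3) by field.
    replace (/3 + 2/3) with 1 by field.
    replace (3 * 0) with 0 by ring. replace (0 + /3) with (/3) by ring.
    replace (0 + 2/3) with (2/3) by ring.
    rewrite (Bp_1 (S (S n))) by lia. ring.
Qed.

Lemma sin_lower (y:R) : 0 <= y <= 2 -> y / 3 <= sin y.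
Proof.
  intro H. assert (HP := PI2_3_2).
  destruct (SIN y) as [H1 _]; try lra.
  assert (E: sin_lb y = y - y^3/6 + y^5/120 - y^7/5040) by (unfold sin_lb, sin_approx, sin_term; simpl; field).
  rewrite E in H1.
  assert (0 <= y^5 * (42 - y^2)). { apply Rmult_le_pos. apply pow_le; lra. nra. }
  assert (y^3 <= 4 * y) by nra.
  nra.
Qed.

Lemma Bp_ex_derive m (x : R) : ex_derive (Bp m) x.
Proof.
  destruct m.
  - apply ex_derive_ext with (fun _ => 1). intro; rewrite Bp0; auto. apply ex_derive_const.
  - exists (INR (S m) * Bp m x). apply Bp_deriv.
Qed.

Lemma Derive_Bp m (x : R) : Derive (Bp (S m)) x = INR (S m) * Bp m x.
Proof. apply is_derive_unique, Bp_deriv. Qed.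

Lemma cont_ex (f : R -> R) (x : R) : ex_derive f x -> continuous f x.
Proof. intro H. exact (ex_derive_continuous (K:=R_AbsRing) (V:=R_NormedModule) f x H). Qed.

Lemma is_RInt_eq (f g : R -> R) a b (l l' : R) :
  is_RInt f a b l -> (forall x, f x = g x) -> l = l' -> is_RInt g a b l'.
Proof. intros H E1 E2. subst. eapply is_RInt_ext; [|exact H]. intros; auto. Qed.

Fixpoint ICS (a : R) (m : nat) : R * R :=
  match m with
  | O => (0, 0)
  | S m' => let (c, s) := ICS a m' in
      (- (INR (S m') / a) * s, - (Bp (S m') 1 - Bp (S m') 0) / a + INR (S m') / a * c)
  end.

Lemma fourier_parts a : a <> 0 -> sin a = 0 -> cos a = 1 -> forall m,
  is_RInt (fun x => Bp m x * cos (a * x)) 0 1 (fst (ICS a m)) /\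
  is_RInt (fun x => Bp m x * sin (a * x)) 0 1 (snd (ICS a m)).
Proof.
  intros Ha Hs Hc m. induction m.
  - simpl. split.
    + eapply is_RInt_eq; [apply (is_RInt_derive (fun x => sin (a * x) / a) (fun x => cos (a * x)))| |].
      * intros x _. auto_derive; auto. field; auto.
      * intros x _. apply cont_ex. auto_derive. auto.
      * intros; rewrite Bp0; ring.
      * unfold minus, plus, opp; simpl. rewrite Rmult_1_r, Rmult_0_r, Hs, sin_0. field; auto.
    + eapply is_RInt_eq; [apply (is_RInt_derive (fun x => - cos (a * x) / a) (fun x => sin (a * x)))| |].
      * intros x _. auto_derive; auto. field; auto.
      * intros x _. apply cont_ex. auto_derive. auto.
      * intros; rewrite Bp0; ring.
      * unfold minus, plus, opp; simpl. rewrite Rmult_1_r, Rmult_0_r, Hc, cos_0. field; auto.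
  - simpl. destruct (ICS a m) as [c s]. simpl in *. destruct IHm as [IHc IHs]. split.
    + assert (H1 : is_RInt (fun x => INR (S m) * Bp m x * sin (a * x) / a + Bp (S m) x * cos (a * x)) 0 1
          (minus (Bp (S m) 1 * sin (a * 1) / a) (Bp (S m) 0 * sin (a * 0) / a))).
      { apply (is_RInt_derive (fun x => Bp (S m) x * sin (a * x) / a)).
        - intros x _. auto_derive; [apply Bp_ex_derive|].
          change (fun x0 => Bp (S m) x0) with (Bp (S m)). rewrite Derive_Bp. field; auto.
        - intros x _. apply cont_ex. auto_derive. repeat split; apply Bp_ex_derive. }
      assert (H2 := is_RInt_minus _ _ _ _ _ _ H1 (is_RInt_scal _ _ _ (INR (S m) / a) _ IHs)).
      eapply is_RInt_eq; [exact H2| |].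
      * intros x. unfold minus, plus, opp, scal; simpl. unfold mult; simpl. field; auto.
      * unfold minus, plus, opp, scal; simpl. unfold mult; simpl.
        rewrite Rmult_1_r, Rmult_0_r, Hs, sin_0. field; auto.
    + assert (H1 : is_RInt (fun x => - (INR (S m) * Bp m x * cos (a * x)) / a + Bp (S m) x * sin (a * x)) 0 1
          (minus (- Bp (S m) 1 * cos (a * 1) / a) (- Bp (S m) 0 * cos (a * 0) / a))).
      { apply (is_RInt_derive (fun x => - Bp (S m) x * cos (a * x) / a)).
        - intros x _. auto_derive; [apply Bp_ex_derive|].
          change (fun x0 => Bp (S m) x0) with (Bp (S m)). rewrite Derive_Bp. field; auto.
        - intros x _. apply cont_ex. auto_derive. repeat split; apply Bp_ex_derive. }
      assert (H2 := is_RInt_plus _ _ _ _ _ _ H1 (is_RInt_scal _ _ _ (INR (S m) / a) _ IHc)).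
      eapply is_RInt_eq; [exact H2| |].
      * intros x. unfold minus, plus, opp, scal; simpl. unfold mult; simpl. field; auto.
      * unfold minus, plus, opp, scal; simpl. unfold mult; simpl.
        rewrite Rmult_1_r, Rmult_0_r, Hc, cos_0. field; auto.
Qed.

Lemma ICS_S a m : ICS a (S m) = let (c, s) := ICS a m in
      (- (INR (S m) / a) * s, - (Bp (S m) 1 - Bp (S m) 0) / a + INR (S m) / a * c).
Proof. reflexivity. Qed.

Lemma Bp1_diff : Bp 1 1 - Bp 1 0 = 1.
Proof. unfold Bp, Binomial.C. simpl. unfold bern. simpl. field. Qed.

Lemma ICS_odd a : a <> 0 -> forall k,
  ICS a (2 * k + 1) = (0, (-1) ^ (k + 1) * INR (fact (2 * k + 1)) / a ^ (2 * k + 1)).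
Proof.
  intros Ha k. induction k.
  - simpl. rewrite Bp1_diff. f_equal; field; auto.
  - replace (2 * S k + 1)%nat with (S (S (2 * k + 1))) by lia.
    rewrite ICS_S, ICS_S, IHk.
    rewrite (Bp_1 (S (2 * k + 1))), (Bp_1 (S (S (2 * k + 1)))) by lia.
    set (N := (2 * k + 1)%nat).
    f_equal; [field; auto|].
    replace (S k + 1)%nat with (S (k + 1)) by lia.
    rewrite !fact_simpl, !mult_INR, !S_INR.
    rewrite <- !tech_pow_Rmult. field. split; auto. apply pow_nonzero; auto.
Qed.

Lemma ICS_even a : a <> 0 -> forall k,
  fst (ICS a (2 * k + 2)) = (-1) ^ k * INR (fact (2 * k + 2)) / a ^ (2 * k + 2).
Proof.
  intros Ha k. replace (2 * k + 2)%nat with (S (2 * k + 1)) by lia.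
  rewrite ICS_S, ICS_odd by auto. 
  set (N := (2 * k + 1)%nat). cbv beta iota zeta. unfold fst.
  rewrite fact_simpl, mult_INR, <- tech_pow_Rmult, pow_add, pow_1.
  field. split; auto. apply pow_nonzero; auto.
Qed.

Definition af (i : nat) : R := 2 * PI * INR (S i).
Definition SN (N : nat) (x : R) : R := sum_f_R0 (fun i => cos (af i * x)) N.

Lemma af_sin i : sin (af i) = 0.
Proof. unfold af. replace (2 * PI * INR (S i)) with (0 + 2 * INR (S i) * PI) by ring.
  rewrite sin_period. apply sin_0. Qed.
Lemma af_cos i : cos (af i) = 1.
Proof. unfold af. replace (2 * PI * INR (S i)) with (0 + 2 * INR (S i) * PI) by ring.
  rewrite cos_period. apply cos_0. Qed.
Lemma af_nz i : af i <> 0.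
Proof. unfold af. assert (0 < INR (S i)) by (apply lt_0_INR; lia).
  assert (HP := PI_RGT_0). apply Rgt_not_eq. apply Rmult_lt_0_compat; lra. Qed.

Lemma int_BpSN m : forall N, is_RInt (fun x => Bp m x * SN N x) 0 1
   (sum_f_R0 (fun i => fst (ICS (af i) m)) N).
Proof.
  induction N.
  - simpl. eapply is_RInt_eq; [apply (proj1 (fourier_parts (af 0) (af_nz 0) (af_sin 0) (af_cos 0) m))| |].
    + intro x. unfold SN. simpl. reflexivity.
    + reflexivity.
  - eapply is_RInt_eq; [apply (is_RInt_plus _ _ _ _ _ _ IHN
       (proj1 (fourier_parts (af (S N)) (af_nz _) (af_sin _) (af_cos _) m)))| |].
    + intro x. unfold SN, plus; simpl. ring.
    + reflexivity.
Qed.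

Lemma int_Bp n : is_RInt (Bp (S n)) 0 1 0.
Proof.
  eapply is_RInt_eq; [apply (is_RInt_derive (fun x => Bp (S (S n)) x / INR (S (S n))) (Bp (S n)))| |].
  - intros x _. eapply is_derive_eq; [apply is_derive_scal with (k := / INR (S (S n))); apply (Bp_deriv (S n))| |].
    + intro t. unfold Rdiv. ring.
    + field. apply not_0_INR; lia.
  - intros x _. apply cont_ex, Bp_ex_derive.
  - reflexivity.
  - unfold minus, plus, opp; simpl. rewrite Bp_1 by lia. ring.
Qed.

Lemma two_sin_cos m th : 2 * sin th * cos (2 * m * th) =
  sin ((2 * m + 1) * th) - sin ((2 * m - 1) * th).
Proof.
  replace ((2 * m + 1) * th) with (2 * m * th + th) by ring.
  replace ((2 * m - 1) * th) with (2 * m * th - th) by ring.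
  rewrite sin_plus, sin_minus. ring.
Qed.

Lemma SN_closed N x : 2 * sin (PI * x) * (SN N x + / 2) = sin ((2 * INR N + 3) * PI * x).
Proof.
  induction N.
  - unfold SN. cbn [sum_f_R0]. unfold af. replace (2 * PI * INR 1 * x) with (2 * 1 * (PI * x)) by (change (INR 1) with 1; ring).
    replace (2 * sin (PI * x) * (cos (2 * 1 * (PI * x)) + / 2)) with
      (2 * sin (PI * x) * cos (2 * 1 * (PI * x)) + sin (PI * x)) by field.
    rewrite two_sin_cos. replace ((2 * 1 - 1) * (PI * x)) with (PI * x) by ring.
    replace ((2 * INR 0 + 3) * PI * x) with ((2 * 1 + 1) * (PI * x)) by (change (INR 0) with 0; ring). ring.
  - unfold SN in *. rewrite tech5.
    replace (af (S N) * x) with (2 * INR (S (S N)) * (PI * x)) by (unfold af; ring).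
    replace (2 * sin (PI * x) * (sum_f_R0 (fun i : nat => cos (af i * x)) N + cos (2 * INR (S (S N)) * (PI * x)) + / 2))
      with (2 * sin (PI * x) * (sum_f_R0 (fun i : nat => cos (af i * x)) N + / 2) +
            2 * sin (PI * x) * cos (2 * INR (S (S N)) * (PI * x))) by ring.
    rewrite IHN, two_sin_cos. rewrite !S_INR.
    replace ((2 * (INR N + 1 + 1) - 1) * (PI * x)) with ((2 * INR N + 3) * PI * x) by ring.
    replace ((2 * (INR N + 1 + 1) + 1) * (PI * x)) with ((2 * (INR N + 1) + 3) * PI * x) by ring.
    ring.
Qed.

Definition BB m := sum_f_R0 (fun k => Rabs (Binomial.C m k * bern k)) m.

Lemma pow_le_one' x n : 0 <= x <= 1 -> x ^ n <= 1.
Proof. intro H. induction n; simpl; [lra|]. assert (0 <= x ^ n) by (apply pow_le; lra). nra. Qed.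

Lemma Bp_bound m x : 0 <= x <= 1 -> Rabs (Bp m x) <= BB m.
Proof.
  intro H. unfold Bp, BB. eapply Rle_trans; [apply Rsum_abs|].
  apply sum_Rle. intros k _. rewrite Rabs_mult.
  assert (0 <= x ^ (m - k)) by (apply pow_le; lra).
  rewrite (Rabs_right (x ^ (m - k))) by lra.
  assert (x ^ (m - k) <= 1) by (apply pow_le_one'; auto).
  assert (0 <= Rabs (Binomial.C m k * bern k)) by apply Rabs_pos. nra.
Qed.

Definition PP n' x := Bp (S n') x - bern (S n').
Definition AA n' := INR (S n') * BB n'.

Lemma PP_deriv n' x : is_derive (PP n') x (INR (S n') * Bp n' x).
Proof.
  eapply is_derive_eq; [apply (is_derive_minus _ _ x _ _ (Bp_deriv n' x) (is_derive_const (bern (S n')) x))| |].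
  - intro t. reflexivity.
  - unfold minus, plus, opp, zero; simpl. ring.
Qed.

Lemma PP_0 n' : PP n' 0 = 0.
Proof. unfold PP. rewrite Bp_0. ring. Qed.
Lemma PP_1 n' : (1 <= n')%nat -> PP n' 1 = 0.
Proof. intro. unfold PP. rewrite Bp_1 by lia. rewrite Bp_0. ring. Qed.

Lemma AA_pos n' : 0 <= AA n'.
Proof. unfold AA, BB. apply Rmult_le_pos. apply pos_INR.
  apply cond_pos_sum. intro; apply Rabs_pos. Qed.

Lemma PP_bound_mvt n' u v : 0 <= u <= v -> v <= 1 -> Rabs (PP n' v - PP n' u) <= AA n' * (v - u).
Proof.
  intros H1 H2.
  destruct (MVT_gen (PP n') u v (fun x => INR (S n') * Bp n' x)) as [c [Hc E]].
  - intros; apply PP_deriv.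
  - intros; eapply der_cont; apply PP_deriv.
  - rewrite Rmin_left in Hc by lra. rewrite Rmax_right in Hc by lra.
    rewrite E, Rabs_mult, (Rabs_right (v - u)) by lra. unfold AA.
    apply Rmult_le_compat_r; [lra|]. rewrite Rabs_mult, Rabs_right by (apply Rle_ge, pos_INR).
    apply Rmult_le_compat_l; [apply pos_INR|]. apply Bp_bound; lra.
Qed.

Lemma PP_bound_left n' x : 0 <= x <= 1 -> Rabs (PP n' x) <= AA n' * x.
Proof. intro H. assert (E := PP_bound_mvt n' 0 x). rewrite PP_0 in E.
  replace (PP n' x) with (PP n' x - 0) by ring. replace x with (x - 0) at 2 by ring. apply E; lra. Qed.

Lemma PP_bound_right n' x : (1 <= n')%nat -> 0 <= x <= 1 -> Rabs (PP n' x) <= AA n' * (1 - x).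
Proof. intros Hn H. assert (E := PP_bound_mvt n' x 1). rewrite PP_1 in E by auto.
  rewrite <- Rabs_Ropp. replace (- PP n' x) with (0 - PP n' x) by ring. apply E; lra. Qed.

Definition QQ n' N x := PP n' x * (SN N x + / 2).

Lemma QQ_aux n' N x t : 0 < t -> t <= sin (PI * x) -> Rabs (PP n' x) <= AA n' * t ->
  Rabs (QQ n' N x) <= AA n'.
Proof.
  intros Ht Hs HP. unfold QQ.
  assert (E : SN N x + / 2 = sin ((2 * INR N + 3) * PI * x) / (2 * sin (PI * x))).
  { rewrite <- SN_closed. field. lra. }
  rewrite E, Rabs_mult.
  assert (Rabs (sin ((2 * INR N + 3) * PI * x) / (2 * sin (PI * x))) <= / (2 * t)).
  { unfold Rdiv. rewrite Rabs_mult, Rabs_inv, (Rabs_right (2 * sin (PI * x))) by lra.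
    assert (Rabs (sin ((2 * INR N + 3) * PI * x)) <= 1) by (apply Rabs_le; apply SIN_bound).
    assert (0 <= Rabs (sin ((2 * INR N + 3) * PI * x))) by apply Rabs_pos.
    apply Rle_trans with (1 * / (2 * sin (PI * x))).
    - apply Rmult_le_compat_r; auto. left; apply Rinv_0_lt_compat; lra.
    - rewrite Rmult_1_l. apply Rinv_le_contravar; lra. }
  assert (0 <= Rabs (PP n' x)) by apply Rabs_pos.
  assert (HA := AA_pos n').
  apply Rle_trans with (AA n' * t * / (2 * t)).
  - apply Rmult_le_compat; auto. apply Rabs_pos.
  - replace (AA n' * t * / (2 * t)) with (AA n' / 2) by (field; lra). lra.
Qed.

Lemma QQ_bound n' N x : (1 <= n')%nat -> 0 <= x <= 1 -> Rabs (QQ n' N x) <= AA n'.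
Proof.
  intros Hn H. assert (HP := PI2_3_2). assert (HA := AA_pos n').
  destruct (Req_dec x 0) as [->|H0].
  { unfold QQ. rewrite PP_0, Rmult_0_l, Rabs_R0. auto. }
  destruct (Req_dec x 1) as [->|H1].
  { unfold QQ. rewrite PP_1, Rmult_0_l, Rabs_R0 by auto. auto. }
  destruct (Rle_lt_dec x (/2)) as [Hx|Hx].
  - apply QQ_aux with x; [lra| |apply PP_bound_left; lra].
    assert (HP4 := PI_4). assert (E := sin_lower (PI * x)).
    assert (PI * x / 3 <= sin (PI * x)) by (apply E; split; nra). nra.
  - apply QQ_aux with (1 - x); [lra| |apply PP_bound_right; auto; lra].
    replace (PI * x) with (PI - PI * (1 - x)) by ring. rewrite sin_PI_x.
    assert (HP4 := PI_4). assert (E := sin_lower (PI * (1 - x))).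
    assert (PI * (1 - x) / 3 <= sin (PI * (1 - x))) by (apply E; split; nra). nra.
Qed.

Definition gg n' x := PP n' x / (2 * sin (PI * x)).
Definition dgg n' x := (INR (S n') * Bp n' x * (2 * sin (PI * x)) - PP n' x * (2 * (PI * cos (PI * x))))
   / (2 * sin (PI * x)) ^ 2.

Lemma PP_ex_derive n' x : ex_derive (PP n') x.
Proof. exists (INR (S n') * Bp n' x). apply PP_deriv. Qed.

Lemma Derive_PP n' x : Derive (PP n') x = INR (S n') * Bp n' x.
Proof. apply is_derive_unique, PP_deriv. Qed.

Lemma gg_deriv n' x : sin (PI * x) <> 0 -> is_derive (gg n') x (dgg n' x).
Proof.
  intro Hs. unfold gg, dgg. auto_derive.
  - repeat split; try apply PP_ex_derive; auto. try (intro E; apply Hs; lra).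
  - change (fun x0 => PP n' x0) with (PP n'). rewrite Derive_PP. field. auto.
Qed.

Lemma dgg_cont n' x : sin (PI * x) <> 0 -> continuous (dgg n') x.
Proof.
  intro Hs. apply cont_ex. unfold dgg. auto_derive.
  split; [apply Bp_ex_derive|]. split; [apply PP_ex_derive|]. split; auto.
  rewrite Rmult_1_r. apply Rmult_integral_contrapositive; split; intro E; apply Hs; lra.
Qed.

Definition FF n' M x := - gg n' x * cos (M * PI * x) / (M * PI).
Definition dFF n' M x := - dgg n' x * cos (M * PI * x) / (M * PI) + gg n' x * sin (M * PI * x).

Lemma Derive_gg n' x : sin (PI * x) <> 0 -> Derive (fun y => gg n' y) x = dgg n' x.
Proof. intro. apply is_derive_unique, gg_deriv; auto. Qed.

Lemma FF_deriv n' M x : 0 < M -> sin (PI * x) <> 0 -> is_derive (FF n' M) x (dFF n' M x).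
Proof.
  intros HM Hs. assert (HP := PI_RGT_0). unfold FF, dFF. auto_derive.
  - exists (dgg n' x); apply gg_deriv; auto.
  - rewrite Derive_gg by auto. field. nra.
Qed.

Lemma dFF_cont n' M x : 0 < M -> sin (PI * x) <> 0 -> continuous (dFF n' M) x.
Proof.
  intros HM Hs. assert (HP := PI_RGT_0). apply cont_ex. unfold dFF, dgg, gg. auto_derive.
  assert (H2 : 2 * sin (PI * x) <> 0) by (intro E; apply Hs; lra).
  split; [apply Bp_ex_derive|]. split; [apply PP_ex_derive|].
  split; [rewrite Rmult_1_r; apply Rmult_integral_contrapositive; split; auto|].
  split; [apply PP_ex_derive|]. split; auto.
Qed.

Lemma sin_mid x : 0 < x < 1 -> 0 < sin (PI * x).
Proof. intro H. assert (HP := PI_RGT_0). apply sin_gt_0; nra. Qed.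

Lemma QQ_eq n' N x : 0 < x < 1 ->
  QQ n' N x = dFF n' (2 * INR N + 3) x
     + / ((2 * INR N + 3) * PI) * (dgg n' x * cos ((2 * INR N + 3) * PI * x)).
Proof.
  intro H. assert (Hs := sin_mid x H). assert (HP := PI_RGT_0).
  assert (0 <= INR N) by apply pos_INR.
  unfold QQ, dFF, gg.
  replace (SN N x + / 2) with (sin ((2 * INR N + 3) * PI * x) / (2 * sin (PI * x))).
  - field. split; lra.
  - rewrite <- SN_closed. field. lra.
Qed.

Lemma ex_RInt_cont (f : R -> R) a b :
  (forall z, Rmin a b <= z <= Rmax a b -> continuous f z) -> ex_RInt f a b.
Proof. apply (ex_RInt_continuous (V:=R_CompleteNormedModule)). Qed.

Definition Dd n' d := Rabs (gg n' d) + Rabs (gg n' (1 - d)) + RInt (fun x => Rabs (dgg n' x)) d (1 - d).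

Lemma QQ_mid n' N d : 0 < d <= / 4 ->
  Rabs (RInt (QQ n' N) d (1 - d)) <= Dd n' d / ((2 * INR N + 3) * PI).
Proof.
  intros Hd. set (M := 2 * INR N + 3). assert (HP := PI_RGT_0).
  assert (HM : 3 <= M) by (unfold M; assert (0 <= INR N) by apply pos_INR; lra).
  assert (Hin : forall x, Rmin d (1 - d) <= x <= Rmax d (1 - d) -> sin (PI * x) <> 0).
  { intros x Hx. rewrite Rmin_left, Rmax_right in Hx by lra.
    apply Rgt_not_eq, sin_mid; lra. }
  assert (H1 : is_RInt (dFF n' M) d (1 - d) (minus (FF n' M (1 - d)) (FF n' M d))).
  { apply (is_RInt_derive (FF n' M) (dFF n' M)).
    - intros x Hx. apply FF_deriv; [lra | auto].
    - intros x Hx. apply dFF_cont; [lra | auto]. }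
  assert (Hc : forall x, Rmin d (1 - d) <= x <= Rmax d (1 - d) ->
     continuous (fun x => dgg n' x * cos (M * PI * x)) x).
  { intros x Hx. apply (continuous_mult (fun x => dgg n' x) (fun x => cos (M * PI * x))).
    - apply dgg_cont; auto.
    - apply cont_ex. auto_derive. auto. }
  assert (H2 : ex_RInt (fun x => dgg n' x * cos (M * PI * x)) d (1 - d)).
  { apply ex_RInt_cont. auto. }
  assert (H3 := is_RInt_plus _ _ _ _ _ _ H1 (is_RInt_scal _ _ _ (/ (M * PI)) _ (RInt_correct _ _ _ H2))).
  assert (E : RInt (QQ n' N) d (1 - d) = plus (minus (FF n' M (1 - d)) (FF n' M d))
      (scal (/ (M * PI)) (RInt (fun x => dgg n' x * cos (M * PI * x)) d (1 - d)))).
  { apply is_RInt_unique. eapply is_RInt_ext; [|exact H3].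
    intros x Hx. rewrite Rmin_left, Rmax_right in Hx by lra.
    rewrite QQ_eq by lra. reflexivity. }
  rewrite E. unfold minus, plus, opp, scal; simpl. unfold mult; simpl.
  assert (Hab : Rabs (RInt (fun x => dgg n' x * cos (M * PI * x)) d (1 - d)) <=
                RInt (fun x => Rabs (dgg n' x)) d (1 - d)).
  { eapply Rle_trans; [apply abs_RInt_le; [lra|auto]|].
    apply RInt_le; [lra| | |].
    - apply ex_RInt_cont. intros x Hx. apply continuous_Rabs_comp. apply Hc; auto.
    - apply ex_RInt_cont. intros x Hx. apply continuous_Rabs_comp. apply dgg_cont; auto.
    - intros x Hx. rewrite Rabs_mult. 
      assert (Rabs (cos (M * PI * x)) <= 1) by (apply Rabs_le; apply COS_bound).
      assert (0 <= Rabs (dgg n' x)) by apply Rabs_pos. nra. }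
  unfold FF, Dd.
  assert (Hmp : 0 < M * PI) by nra.
  assert (Hc1 : Rabs (cos (M * PI * (1 - d))) <= 1) by (apply Rabs_le; apply COS_bound).
  assert (Hc2 : Rabs (cos (M * PI * d)) <= 1) by (apply Rabs_le; apply COS_bound).
  replace (- gg n' (1 - d) * cos (M * PI * (1 - d)) / (M * PI) + - (- gg n' d * cos (M * PI * d) / (M * PI)) +
     / (M * PI) * RInt (fun x : R => dgg n' x * cos (M * PI * x)) d (1 - d))
   with ((- gg n' (1 - d) * cos (M * PI * (1 - d)) + gg n' d * cos (M * PI * d) +
     RInt (fun x : R => dgg n' x * cos (M * PI * x)) d (1 - d)) / (M * PI)) by (field; lra).
  unfold Rdiv. rewrite Rabs_mult, (Rabs_right (/ (M * PI))) by (apply Rle_ge; left; apply Rinv_0_lt_compat; lra).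
  apply Rmult_le_compat_r; [left; apply Rinv_0_lt_compat; lra|].
  eapply Rle_trans; [apply Rabs_triang|]. eapply Rle_trans; [apply Rplus_le_compat_r; apply Rabs_triang|].
  rewrite !Rabs_mult, Rabs_Ropp.
  assert (0 <= Rabs (gg n' d)) by apply Rabs_pos. assert (0 <= Rabs (gg n' (1 - d))) by apply Rabs_pos.
  nra.
Qed.

Lemma nat_gt r : exists N : nat, r < INR N.
Proof.
  destruct (archimed (Rabs r)) as [H1 _].
  assert (Hp : (0 <= up (Rabs r))%Z).
  { apply le_IZR. assert (0 <= Rabs r) by apply Rabs_pos. lra. }
  exists (Z.to_nat (up (Rabs r))). rewrite INR_IZR_INZ, Z2Nat.id by auto.
  assert (r <= Rabs r) by apply RRle_abs. lra.
Qed.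

Lemma SN_ex_derive N x : ex_derive (SN N) x.
Proof.
  induction N.
  - unfold SN; simpl. auto_derive. auto.
  - apply ex_derive_ext with (fun y => SN N y + cos (af (S N) * y)).
    + intro t. unfold SN. simpl. reflexivity.
    + auto_derive. exact IHN.
Qed.

Lemma QQ_cont n' N x : continuous (QQ n' N) x.
Proof.
  apply cont_ex. unfold QQ. auto_derive. split; [apply PP_ex_derive|]. split; auto.
  apply SN_ex_derive.
Qed.

Lemma QQ_ex n' N a b : ex_RInt (QQ n' N) a b.
Proof. apply ex_RInt_cont. intros; apply QQ_cont. Qed.

Lemma Chasles_R (f : R -> R) a b c : ex_RInt f a b -> ex_RInt f b c ->
  RInt f a b + RInt f b c = RInt f a c.
Proof. apply (RInt_Chasles (V:=R_CompleteNormedModule)). Qed.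

Lemma QQ_small n' : (1 <= n')%nat -> forall eps, 0 < eps -> exists N0, forall N, (N0 <= N)%nat ->
  Rabs (RInt (QQ n' N) 0 1) < eps.
Proof.
  intros Hn eps He. assert (HA := AA_pos n'). assert (HP := PI_RGT_0). assert (HP3 := PI2_3_2).
  set (d := Rmin (/4) (eps / (4 * (AA n' + 1)))).
  assert (Hd1 : 0 < d).
  { unfold d. apply Rmin_glb_lt; [lra|]. apply Rdiv_lt_0_compat; lra. }
  assert (Hd2 : d <= / 4) by apply Rmin_l.
  assert (Hd3 : d * AA n' <= eps / 4).
  { assert (d <= eps / (4 * (AA n' + 1))) by apply Rmin_r.
    apply Rle_trans with (eps / (4 * (AA n' + 1)) * (AA n' + 1)).
    - nra.
    - right. field. lra. }
  assert (HD : 0 <= Dd n' d).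
  { unfold Dd. assert (0 <= RInt (fun x => Rabs (dgg n' x)) d (1 - d)).
    { apply RInt_ge_0; [lra| |intros; apply Rabs_pos].
      apply ex_RInt_cont. intros z Hz. apply continuous_Rabs_comp.
      rewrite Rmin_left, Rmax_right in Hz by lra. apply dgg_cont.
      apply Rgt_not_eq, sin_mid; lra. }
    assert (0 <= Rabs (gg n' d)) by apply Rabs_pos.
    assert (0 <= Rabs (gg n' (1 - d))) by apply Rabs_pos. lra. }
  destruct (nat_gt (2 * Dd n' d / eps)) as [N0 HN0].
  exists N0. intros N HN.
  assert (HNN : INR N0 <= INR N) by (apply le_INR; auto).
  rewrite <- (Chasles_R _ 0 d 1), <- (Chasles_R _ d (1 - d) 1) by apply QQ_ex.
  assert (E1 : Rabs (RInt (QQ n' N) 0 d) <= (d - 0) * AA n').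
  { apply abs_RInt_le_const; [lra|apply QQ_ex|]. intros t Ht. apply QQ_bound; auto; lra. }
  assert (E2 : Rabs (RInt (QQ n' N) (1 - d) 1) <= (1 - (1 - d)) * AA n').
  { apply abs_RInt_le_const; [lra|apply QQ_ex|]. intros t Ht. apply QQ_bound; auto; lra. }
  assert (E3 := QQ_mid n' N d (conj Hd1 Hd2)).
  assert (E4 : Dd n' d / ((2 * INR N + 3) * PI) < eps / 2).
  { assert (0 <= INR N) by apply pos_INR.
    set (X := (2 * INR N + 3) * PI).
    assert (HX : 2 * Dd n' d / eps < X) by (unfold X; nra).
    assert (HX2 : 2 * Dd n' d < eps * X).
    { replace (2 * Dd n' d) with (2 * Dd n' d / eps * eps) by (field; lra). nra. }
    assert (0 < X) by (unfold X; nra).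
    unfold Rdiv. apply (Rmult_lt_reg_r X); [lra|]. rewrite Rmult_assoc, Rinv_l, Rmult_1_r by lra. lra. }
  pose proof (Rabs_triang (RInt (QQ n' N) 0 d)
     (RInt (QQ n' N) d (1 - d) + RInt (QQ n' N) (1 - d) 1)).
  pose proof (Rabs_triang (RInt (QQ n' N) d (1 - d)) (RInt (QQ n' N) (1 - d) 1)).
  lra.
Qed.

Lemma QQ_int n' N : is_RInt (QQ n' N) 0 1
  (sum_f_R0 (fun i => fst (ICS (af i) (S n'))) N - bern (S n') / 2).
Proof.
  assert (H1 := int_BpSN (S n') N).
  assert (H2 := int_Bp n').
  assert (H3 := int_BpSN 0 N).
  assert (H4 := is_RInt_const 0 1 (bern (S n') / 2)).
  assert (H := is_RInt_minus _ _ _ _ _ _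
     (is_RInt_minus _ _ _ _ _ _ (is_RInt_plus _ _ _ _ _ _ H1 (is_RInt_scal _ _ _ (/2) _ H2))
        (is_RInt_scal _ _ _ (bern (S n')) _ H3)) H4).
  eapply is_RInt_eq; [exact H| |].
  - intro x. unfold minus, plus, opp, scal; simpl. unfold mult; simpl.
    rewrite Bp0. unfold QQ, PP. set (u := SN N x). set (v := Bp (S n') x). set (w := bern (S n')). field.
  - unfold minus, plus, opp, scal; simpl. unfold mult; simpl.
    rewrite (sum_eq_R0 (fun i => fst (ICS (af i) 0))) by (intros; reflexivity). ring.
Qed.

Lemma partial_zeta k N :
  sum_f_R0 (fun i => fst (ICS (af i) (2 * k + 2))) N =
  (-1) ^ k * INR (fact (2 * k + 2)) / (2 * PI) ^ (2 * k + 2) *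
  sum_f_R0 (fun i => / INR (S i) ^ (2 * k + 2)) N.
Proof.
  rewrite scal_sum. apply sum_eq. intros i _. rewrite ICS_even by apply af_nz.
  unfold af. rewrite !Rpow_mult_distr. field.
  assert (HP := PI_RGT_0). assert (0 < INR (S i)) by (apply lt_0_INR; lia).
  repeat split; apply pow_nonzero; lra.
Qed.

Lemma zeta_inf k : infinite_sum (fun i => / INR (S i) ^ (2 * k + 2))
  (bern (2 * k + 2) * (2 * PI) ^ (2 * k + 2) / (2 * ((-1) ^ k * INR (fact (2 * k + 2))))).
Proof.
  set (c := (-1) ^ k * INR (fact (2 * k + 2)) / (2 * PI) ^ (2 * k + 2)).
  assert (HP := PI_RGT_0).
  assert (Hc : c <> 0).
  { unfold c. apply Rmult_integral_contrapositive. split.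
    - apply Rmult_integral_contrapositive. split. apply pow_nonzero; lra. apply INR_fact_neq_0.
    - apply Rinv_neq_0_compat, pow_nonzero. lra. }
  assert (Hca : 0 < Rabs c) by (apply Rabs_pos_lt; auto).
  intros eps He.
  destruct (QQ_small (2 * k + 1) ltac:(lia) (eps * Rabs c) ltac:(nra)) as [N0 HN0].
  exists N0. intros N HN. unfold R_dist.
  assert (E := is_RInt_unique _ _ _ _ (QQ_int (2 * k + 1) N)).
  replace (S (2 * k + 1)) with (2 * k + 2)%nat in E by lia.
  rewrite partial_zeta in E. fold c in E.
  assert (H := HN0 N HN). rewrite E in H.
  set (s := sum_f_R0 (fun i => / INR (S i) ^ (2 * k + 2)) N) in *.
  replace (bern (2 * k + 2) * (2 * PI) ^ (2 * k + 2) / (2 * ((-1) ^ k * INR (fact (2 * k + 2)))))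
    with (bern (2 * k + 2) / (2 * c)).
  2:{ unfold c. field. repeat split; try apply INR_fact_neq_0; try (apply pow_nonzero; lra). }
  replace (s - bern (2 * k + 2) / (2 * c)) with ((c * s - bern (2 * k + 2) / 2) / c) by (field; auto).
  unfold Rdiv. rewrite Rabs_mult, Rabs_inv.
  apply (Rmult_lt_reg_r (Rabs c)); auto. rewrite Rmult_assoc, Rinv_l, Rmult_1_r by lra.
  unfold Rdiv in H. lra.
Qed.

Lemma zeta_even_val m : zeta_even m =
  (-1) ^ (m + 1) * bern (2 * m) * (2 * PI) ^ (2 * m) / (2 * INR (fact (2 * m))).
Proof.
  destruct m as [|k].
  - simpl. unfold bern. simpl. field.
  - unfold zeta_even, zeta_series.
    assert (Hs := zeta_inf k). replace (2 * S k)%nat with (2 * k + 2)%nat by lia.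
    match goal with |- epsilon ?i ?P = _ => set (l := epsilon i P) end.
    assert (Hl : infinite_sum (fun i => / INR (S i) ^ (2 * k + 2)) l).
    { unfold l. apply epsilon_spec. eexists; exact Hs. }
    rewrite (uniqueness_sum _ _ _ Hl Hs).
    replace (S k + 1)%nat with (k + 2)%nat by lia. rewrite (pow_add (-1) k 2).
    assert (Ht : (-1) ^ k * (-1) ^ k = 1).
    { rewrite <- Rpow_mult_distr. replace (-1 * -1) with 1 by ring. apply pow1. }
    replace ((-1) ^ 2) with 1 by ring.
    set (t := (-1) ^ k) in *. assert (t <> 0) by (intro E; rewrite E in Ht; lra).
    set (X := bern (2 * k + 2) * (2 * PI) ^ (2 * k + 2)).
    replace (X / (2 * (t * INR (fact (2 * k + 2))))) with (t * t * (X / (2 * (t * INR (fact (2 * k + 2))))))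
      by (rewrite Ht; ring).
    unfold X. field. split; auto. apply INR_fact_neq_0.
Qed.

Lemma sum_even_odd (f : nat -> R) j :
  sum_f_R0 f (2 * j + 2) = sum_f_R0 (fun m => f (2 * m)%nat) (S j) + sum_f_R0 (fun m => f (2 * m + 1)%nat) j.
Proof.
  induction j.
  - simpl. ring.
  - replace (2 * S j + 2)%nat with (S (S (2 * j + 2))) by lia.
    rewrite !tech5. rewrite IHj. rewrite (tech5 (fun m => f (2 * m)%nat) j).
    replace (S (S (2 * j + 2))) with (2 * S (S j))%nat by lia.
    replace (S (2 * j + 2)) with (2 * S j + 1)%nat by lia. ring.
Qed.

Lemma bern1 : bern 1 = - / 2.
Proof. rewrite bern_rec. simpl. unfold Binomial.C, bern. simpl. field. Qed.

Lemma binom_1 n : Binomial.C (S n) 1 = INR (S n).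
Proof. unfold Binomial.C. replace (S n - 1)%nat with n by lia. rewrite fact_simpl, mult_INR.
  simpl (fact 1). simpl (INR 1). field. apply INR_fact_neq_0. Qed.

Lemma sum_first (g : nat -> R) j : (forall m, (1 <= m)%nat -> g m = 0) -> sum_f_R0 g j = g 0%nat.
Proof. intro H. induction j; simpl; auto. rewrite IHj, (H (S j)) by lia. ring. Qed.

Lemma even_sum j x : (1 <= j)%nat ->
  sum_f_R0 (fun m => Binomial.C (2 * j) (2 * m) * bern (2 * m) * x ^ (2 * j - 2 * m)) j =
  Bp (2 * j) x + INR j * x ^ (2 * j - 1).
Proof.
  intro Hj. destruct j as [|j]; [lia|].
  unfold Bp. replace (2 * S j)%nat with (2 * j + 2)%nat by lia.
  rewrite sum_even_odd.
  rewrite (sum_first (fun m => Binomial.C (2 * j + 2) (2 * m + 1) * bern (2 * m + 1) *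
      x ^ (2 * j + 2 - (2 * m + 1)))).
  2:{ intros i Hi. replace (2 * i + 1)%nat with (2 * (i - 1) + 3)%nat by lia. rewrite bern_odd. ring. }
  replace (2 * 0 + 1)%nat with 1%nat by lia. rewrite bern1.
  replace (2 * j + 2)%nat with (S (2 * j + 1)) at 1 by lia. rewrite binom_1.
  replace (2 * j + 2 - 1)%nat with (2 * S j - 1)%nat by lia.
  replace (2 * j + 2)%nat with (2 * S j)%nat by lia.
  rewrite !S_INR, !plus_INR, !mult_INR. simpl (INR 2). simpl (INR 1). field.
Qed.

Lemma refl_even j x : Bp (2 * j) (1 - x) = Bp (2 * j) x.
Proof. rewrite Bp_reflect, pow_mult. replace ((-1) ^ 2) with 1 by ring. rewrite pow1. ring. Qed.

Lemma pow_pos' a n : 0 < a -> 0 < a ^ n.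
Proof. intro; apply pow_lt; auto. Qed.

Lemma V2 j : Bp (2 * j) (/2) = (2 / 2 ^ (2 * j) - 1) * bern (2 * j).
Proof.
  assert (H := Bp_mult2 (2 * j) 0). rewrite Rmult_0_r, Rplus_0_l, Bp_0 in H.
  assert (0 < 2 ^ (2 * j)) by (apply pow_pos'; lra).
  apply (Rmult_eq_reg_l (2 ^ (2 * j))); [|lra].
  field_simplify; [|lra]. lra.
Qed.

Lemma V3 j : Bp (2 * j) (/3) = (3 / 3 ^ (2 * j) - 1) * bern (2 * j) / 2.
Proof.
  assert (H := Bp_mult3 (2 * j) 0). rewrite Rmult_0_r, !Rplus_0_l, Bp_0 in H.
  replace (2 / 3) with (1 - / 3) in H by field. rewrite refl_even in H.
  assert (0 < 3 ^ (2 * j)) by (apply pow_pos'; lra).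
  apply (Rmult_eq_reg_l (3 ^ (2 * j))); [|lra].
  field_simplify; [|lra]. lra.
Qed.

Lemma V4 j : Bp (2 * j) (/4) = Bp (2 * j) (/2) / 2 ^ (2 * j).
Proof.
  assert (H := Bp_mult2 (2 * j) (/4)).
  replace (2 * / 4) with (/2) in H by field. replace (/4 + /2) with (1 - /4) in H by field.
  rewrite refl_even in H.
  assert (0 < 2 ^ (2 * j)) by (apply pow_pos'; lra).
  apply (Rmult_eq_reg_l (2 ^ (2 * j))); [|lra].
  field_simplify; [|lra]. lra.
Qed.

Lemma V6 j : Bp (2 * j) (/6) = (2 / 2 ^ (2 * j) - 1) * Bp (2 * j) (/3).
Proof.
  assert (H := Bp_mult2 (2 * j) (/3)).
  replace (2 * / 3) with (1 - /3) in H by field. replace (/3 + /2) with (1 - /6) in H by field.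
  rewrite !refl_even in H.
  assert (0 < 2 ^ (2 * j)) by (apply pow_pos'; lra).
  apply (Rmult_eq_reg_l (2 ^ (2 * j))); [|lra].
  field_simplify; [|lra]. lra.
Qed.

Lemma V12 j : Bp (2 * j) (/12) + Bp (2 * j) (7 / 12) = 2 * Bp (2 * j) (/6) / 2 ^ (2 * j).
Proof.
  assert (H := Bp_mult2 (2 * j) (/12)).
  replace (2 * / 12) with (/6) in H by field. replace (/12 + /2) with (7/12) in H by field.
  assert (0 < 2 ^ (2 * j)) by (apply pow_pos'; lra).
  apply (Rmult_eq_reg_l (2 ^ (2 * j))); [|lra].
  field_simplify; [|lra]. lra.
Qed.

Lemma V8 j : Bp (2 * j) (/8) + Bp (2 * j) (5 / 8) = 2 * Bp (2 * j) (/4) / 2 ^ (2 * j).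
Proof.
  assert (H := Bp_mult2 (2 * j) (/8)).
  replace (2 * / 8) with (/4) in H by field. replace (/8 + /2) with (5/8) in H by field.
  assert (0 < 2 ^ (2 * j)) by (apply pow_pos'; lra).
  apply (Rmult_eq_reg_l (2 ^ (2 * j))); [|lra].
  field_simplify; [|lra]. lra.
Qed.

Lemma zpow_a a m : a <> 0 -> zpow a (2 * Z.of_nat m - 1) = a ^ (2 * m) / a.
Proof.
  intro Ha. unfold zpow.
  replace (2 * Z.of_nat m - 1)%Z with (Z.of_nat (2 * m) + (-1))%Z by lia.
  rewrite powerRZ_add by auto. rewrite <- pow_powerRZ. simpl. field. auto.
Qed.

Lemma zpow_b a j : a <> 0 -> zpow a (1 - 2 * Z.of_nat j) = a / a ^ (2 * j).
Proof.
  intro Ha. unfold zpow.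
  replace (1 - 2 * Z.of_nat j)%Z with (1 + - Z.of_nat (2 * j))%Z by lia.
  rewrite powerRZ_add by auto. rewrite powerRZ_neg' , <- pow_powerRZ. simpl. field.
  apply pow_nonzero; auto.
Qed.

Ltac nz := repeat split; try apply INR_fact_neq_0; try (apply pow_nonzero; lra); try lra.

Lemma sgn_sq m : (-1) ^ m * (-1) ^ m = 1.
Proof. rewrite <- Rpow_mult_distr. replace (-1 * -1) with 1 by ring. apply pow1. Qed.

Lemma term_eq j m q : 0 < q ->
  (-1) ^ (m + 1) / (INR (fact (2 * j - 2 * m)) * zpow 2 (2 * Z.of_nat m - 1) * q ^ (2 * j - 2 * m)
     * PI ^ (2 * m)) * zeta_even m
  = Binomial.C (2 * j) (2 * m) * bern (2 * m) * (/ q) ^ (2 * j - 2 * m) / INR (fact (2 * j)).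
Proof.
  intro Hq. assert (HP := PI_RGT_0).
  rewrite zeta_even_val, zpow_a by lra. rewrite Rpow_mult_distr, pow_inv.
  unfold Binomial.C.
  assert (Hs := sgn_sq (m + 1)). set (s := (-1) ^ (m + 1)) in *.
  set (X := bern (2 * m)).
  transitivity (s * s * (X / (INR (fact (2 * j - 2 * m)) * INR (fact (2 * m)) * q ^ (2 * j - 2 * m)))).
  - field. nz.
  - rewrite Hs. field. nz.
Qed.

Lemma sum_term j q : (1 <= j)%nat -> 0 < q ->
  sum_f_R0 (fun m => (-1) ^ (m + 1) / (INR (fact (2 * j - 2 * m)) * zpow 2 (2 * Z.of_nat m - 1)
     * q ^ (2 * j - 2 * m) * PI ^ (2 * m)) * zeta_even m) j
  = (Bp (2 * j) (/ q) + INR j * / q ^ (2 * j - 1)) / INR (fact (2 * j)).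
Proof.
  intros Hj Hq. rewrite (sum_eq _ (fun m => Binomial.C (2 * j) (2 * m) * bern (2 * m) * (/ q) ^ (2 * j - 2 * m)
     * / INR (fact (2 * j)))).
  - rewrite <- scal_sum, even_sum by auto. rewrite pow_inv. field; nz.
  - intros m Hm. rewrite term_eq by auto. reflexivity.
Qed.

Lemma gen_abc q j L : (1 <= j)%nat -> 0 < q -> Bp (2 * j) (/ q) = L * bern (2 * j) / 2 ->
  L * zeta_even j =
    (-1) ^ j * INR j * (2 * PI) ^ (2 * j) / (INR (fact (2 * j)) * q ^ (2 * j - 1))
    + (-1) ^ (j + 1) * (2 * PI) ^ (2 * j) *
      sum_f_R0 (fun m => (-1) ^ (m + 1) /
        (INR (fact (2 * j - 2 * m)) * zpow 2 (2 * Z.of_nat m - 1)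
          * q ^ (2 * j - 2 * m) * PI ^ (2 * m)) * zeta_even m) j.
Proof.
  intros Hj Hq HB. rewrite sum_term by auto. rewrite HB, zeta_even_val.
  rewrite pow_add. assert (HP := PI_RGT_0).
  field. nz.
Qed.

Lemma term_de j m q r : 0 < q ->
  INR (fact (2 * j)) / INR (fact (2 * j - 2 * m))
        * ((-1) ^ (m + 1) / (zpow 2 (2 * Z.of_nat m - 1) * PI ^ (2 * m)))
        * (1 + r ^ (2 * j - 2 * m)) * (zeta_even m / q ^ (2 * j - 2 * m))
  = Binomial.C (2 * j) (2 * m) * bern (2 * m) * (/ q) ^ (2 * j - 2 * m) +
    Binomial.C (2 * j) (2 * m) * bern (2 * m) * (r / q) ^ (2 * j - 2 * m).
Proof.
  intro Hq. assert (HP := PI_RGT_0).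
  rewrite zeta_even_val, zpow_a by lra. unfold Rdiv at 6. rewrite !Rpow_mult_distr, !pow_inv.
  unfold Binomial.C.
  assert (Hs := sgn_sq (m + 1)). set (s := (-1) ^ (m + 1)) in *.
  set (X := bern (2 * m)).
  transitivity (s * s * (X * INR (fact (2 * j)) * (1 + r ^ (2 * j - 2 * m)) /
      (INR (fact (2 * j - 2 * m)) * INR (fact (2 * m)) * q ^ (2 * j - 2 * m)))).
  - field. nz.
  - rewrite Hs. field. nz.
Qed.

Lemma gen_de q r j L : (1 <= j)%nat -> 0 < q ->
  Bp (2 * j) (/ q) + Bp (2 * j) (r / q) = L * bern (2 * j) / 2 ^ (2 * j) ->
  - (INR j / q ^ (2 * j - 1)) * (1 + r ^ (2 * j - 1))
    + sum_f_R0 (fun m => INR (fact (2 * j)) / INR (fact (2 * j - 2 * m))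
        * ((-1) ^ (m + 1) / (zpow 2 (2 * Z.of_nat m - 1) * PI ^ (2 * m)))
        * (1 + r ^ (2 * j - 2 * m)) * (zeta_even m / q ^ (2 * j - 2 * m))) j
  = L * INR (fact (2 * j)) * (-1) ^ (j + 1)
    / (2 ^ (4 * j - 1) * PI ^ (2 * j)) * zeta_even j.
Proof.
  intros Hj Hq HB. assert (HP := PI_RGT_0).
  rewrite (sum_eq _ _ _ (fun m _ => term_de j m q r Hq)).
  rewrite sum_plus, !even_sum by auto. 
  replace (Bp (2 * j) (/ q) + INR j * (/ q) ^ (2 * j - 1) +
   (Bp (2 * j) (r / q) + INR j * (r / q) ^ (2 * j - 1))) with
   (Bp (2 * j) (/ q) + Bp (2 * j) (r / q) + INR j * (/ q) ^ (2 * j - 1) + INR j * (r / q) ^ (2 * j - 1)) by ring.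
  rewrite HB, zeta_even_val. unfold Rdiv at 3. rewrite !Rpow_mult_distr, !pow_inv.
  assert (E : 2 ^ (4 * j - 1) = 2 ^ (2 * j) * 2 ^ (2 * j) / 2).
  { rewrite <- pow_add. replace (2 * j + 2 * j)%nat with (S (4 * j - 1)) by lia.
    rewrite <- tech_pow_Rmult. field. }
  rewrite E, pow_add. assert (Hs := sgn_sq j).
  set (s := (-1) ^ j) in *. set (F := INR (fact (2 * j))).
  assert (F <> 0) by apply INR_fact_neq_0.
  set (b := bern (2 * j)).
  assert (0 < q ^ (2 * j - 1)) by (apply pow_pos'; lra).
  assert (0 < 2 ^ (2 * j)) by (apply pow_pos'; lra).
  assert (0 < PI ^ (2 * j)) by (apply pow_pos'; lra).
  transitivity (L * b / 2 ^ (2 * j)).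
  - field. lra.
  - transitivity (s * s * (L * b / 2 ^ (2 * j))); [rewrite Hs; ring|].
    field. repeat split; lra.
Qed.

Theorem theorem1 : forall j : nat, (1 <= j)%nat ->
  (* (a) *)
  (zpow 3 (1 - 2 * Z.of_nat j) - 1) * zeta_even j =
    (-1) ^ j * INR j * (2 * PI) ^ (2 * j) / (INR (fact (2 * j)) * 3 ^ (2 * j - 1))
    + (-1) ^ (j + 1) * (2 * PI) ^ (2 * j) *
      sum_f_R0 (fun m => (-1) ^ (m + 1) /
        (INR (fact (2 * j - 2 * m)) * zpow 2 (2 * Z.of_nat m - 1)
          * 3 ^ (2 * j - 2 * m) * PI ^ (2 * m)) * zeta_even m) j
  /\
  (* (b) *)
  (zpow 4 (1 - 2 * Z.of_nat j) - zpow 2 (1 - 2 * Z.of_nat j)) * zeta_even j =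
    (-1) ^ j * INR j * (2 * PI) ^ (2 * j) / (INR (fact (2 * j)) * 4 ^ (2 * j - 1))
    + (-1) ^ (j + 1) * (2 * PI) ^ (2 * j) *
      sum_f_R0 (fun m => (-1) ^ (m + 1) /
        (INR (fact (2 * j - 2 * m)) * zpow 2 (2 * Z.of_nat m - 1)
          * 4 ^ (2 * j - 2 * m) * PI ^ (2 * m)) * zeta_even m) j
  /\
  (* (c) *)
  (zpow 6 (1 - 2 * Z.of_nat j) - zpow 3 (1 - 2 * Z.of_nat j)
     - zpow 2 (1 - 2 * Z.of_nat j) + 1) * zeta_even j =
    (-1) ^ j * INR j * (2 * PI) ^ (2 * j) / (INR (fact (2 * j)) * 6 ^ (2 * j - 1))
    + (-1) ^ (j + 1) * (2 * PI) ^ (2 * j) *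
      sum_f_R0 (fun m => (-1) ^ (m + 1) /
        (INR (fact (2 * j - 2 * m)) * zpow 2 (2 * Z.of_nat m - 1)
          * 6 ^ (2 * j - 2 * m) * PI ^ (2 * m)) * zeta_even m) j
  /\
  (* (d) *)
  - (INR j / 12 ^ (2 * j - 1)) * (1 + 7 ^ (2 * j - 1))
    + sum_f_R0 (fun m => INR (fact (2 * j)) / INR (fact (2 * j - 2 * m))
        * ((-1) ^ (m + 1) / (zpow 2 (2 * Z.of_nat m - 1) * PI ^ (2 * m)))
        * (1 + 7 ^ (2 * j - 2 * m)) * (zeta_even m / 12 ^ (2 * j - 2 * m))) j
  = (zpow 6 (1 - 2 * Z.of_nat j) - zpow 3 (1 - 2 * Z.of_nat j)
       - zpow 2 (1 - 2 * Z.of_nat j) + 1) * INR (fact (2 * j)) * (-1) ^ (j + 1)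
    / (2 ^ (4 * j - 1) * PI ^ (2 * j)) * zeta_even j
  /\
  (* (e) *)
  - (INR j / 8 ^ (2 * j - 1)) * (1 + 5 ^ (2 * j - 1))
    + sum_f_R0 (fun m => INR (fact (2 * j)) / INR (fact (2 * j - 2 * m))
        * ((-1) ^ (m + 1) / (zpow 2 (2 * Z.of_nat m - 1) * PI ^ (2 * m)))
        * (1 + 5 ^ (2 * j - 2 * m)) * (zeta_even m / 8 ^ (2 * j - 2 * m))) j
  = (zpow 4 (1 - 2 * Z.of_nat j) - zpow 2 (1 - 2 * Z.of_nat j))
      * INR (fact (2 * j)) * (-1) ^ (j + 1)
    / (2 ^ (4 * j - 1) * PI ^ (2 * j)) * zeta_even j.

Proof.
  intros j Hj.
  assert (H2 := V2 j). assert (H3 := V3 j). assert (H4 := V4 j). assert (H6 := V6 j).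
  assert (H12 := V12 j). assert (H8 := V8 j).
  assert (P2 : 0 < 2 ^ (2 * j)) by (apply pow_pos'; lra).
  assert (P3 : 0 < 3 ^ (2 * j)) by (apply pow_pos'; lra).
  assert (E4 : 4 ^ (2 * j) = 2 ^ (2 * j) * 2 ^ (2 * j)).
  { rewrite <- Rpow_mult_distr. f_equal; ring. }
  assert (E6 : 6 ^ (2 * j) = 2 ^ (2 * j) * 3 ^ (2 * j)).
  { rewrite <- Rpow_mult_distr. f_equal; ring. }
  rewrite !zpow_b by lra. rewrite E4, E6.
  split; [|split; [|split; [|split]]].
  - apply gen_abc; [exact Hj | lra |]. rewrite H3. field. lra.
  - apply gen_abc; [exact Hj | lra |]. rewrite H4, H2. field. lra.
  - apply gen_abc; [exact Hj | lra |]. rewrite H6, H3. field. lra.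
  - apply gen_de; [exact Hj | lra |]. rewrite H12, H6, H3. field. lra.
  - apply gen_de; [exact Hj | lra |]. rewrite H8, H4, H2. field. lra.
Qed.
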